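(* Let $A\in\mathbb{R}^{n\times n}$, $B\in\mathbb{R}^{n\times m}$, $Q=Q^T\geqslant 0$, $R=R^T>0$, with $(A,B)$ controllable and $(A,\sqrt{Q})$ observable. Let $\widetilde{K}_0\in\mathbb{R}^{m\times n}$ be arbitrary, $c_0=1$, and $b>\rho(A-B\widetilde{K}_0)$. For $i=0,1,2,\ldots$, let $\widetilde{P}_i$ be the solution of $$\frac{\prod_{j=0}^i c_j^2}{b^2}(A-B\widetilde{K}_i)^T\widetilde{P}_i(A-B\widetilde{K}_i)-\widetilde{P}_i+Q+\widetilde{K}_i^TR\widetilde{K}_i=0,$$ let $\widetilde{K}_{i+1}=\big(B^T\widetilde{P}_iB+\frac{b^2}{\prod_{j=0}^i c_j^2}R\big)^{-1}B^T\widetilde{P}_iA$, set $\mathcal{Q}_i=\widetilde{P}_i-Q-\widetilde{K}_{i+1}^TR\widetilde{K}_{i+1}$, and let the scaling factor $c_{i+1}$ satisfy $$c_{i+1}=1\ \text{ if } \mathcal{Q}_i \text{ is non-invertible},\qquad 1<c_{i+1}<\sigma(\widetilde{P}_i\mathcal{Q}_i^{-1})^{1/2}\ \text{ if } \mathcal{Q}_i \text{ is invertible}.$$ Then, for each $i=0,1,2,\ldots$, with the gain $\widetilde{K}_{i+1}$ so obtained, the Lyapunov equation at step $i+1$, $$\frac{\prod_{j=0}^{i+1} c_j^2}{b^2}(A-B\widetilde{K}_{i+1})^T\widetilde{P}_{i+1}(A-B\widetilde{K}_{i+1})-\widetilde{P}_{i+1}+Q+\widetilde{K}_{i+1}^TR\widetilde{K}_{i+1}=0,$$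 has a unique positive definite solution $\widetilde{P}_{i+1}$.
   Context: $\rho(Y)$ is the spectral radius of a square matrix $Y$. $\sigma(Y)$ denotes the minimum singular value of $Y$ and $\sigma(Y)^{1/2}$ its square root. Positive definiteness refers to symmetric matrices. *)

(* Defs.v *)
From HB Require Import structures.
From mathcomp Require Import all_boot all_order all_algebra.
From mathcomp Require Import boolp classical_sets reals.
From mathcomp.real_closed Require Import complex.
Set Implicit Arguments. Unset Strict Implicit. Unset Printing Implicit Defensive.
Import Order.TTheory GRing.Theory Num.Theory.
Local Open Scope classical_set_scope.
Local Open Scope ring_scope.

Definition cmod (R : rcfType) (z : R[i]) : R :=
  Num.sqrt (complex.Re z ^+ 2 + complex.Im z ^+ 2).

Definition spectral_radius (R : realType) (n : nat) (Y : 'M[R]_n) : R :=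
  reals.sup [set r : R | exists z : R[i],
     eigenvalue (map_mx (fun x : R => (x%:C)%C) Y) z /\ r = cmod z].

Definition min_singular_value (R : realType) (n : nat) (Y : 'M[R]_n) : R :=
  Num.sqrt (reals.inf [set a : R | eigenvalue (Y^T *m Y) a]).

Definition psd (R : realType) (n : nat) (M : 'M[R]_n) : Prop :=
  M^T = M /\ forall x : 'cV[R]_n, 0 <= (x^T *m M *m x) 0 0.

Definition posdef (R : realType) (n : nat) (M : 'M[R]_n) : Prop :=
  M^T = M /\ forall x : 'cV[R]_n, x != 0 -> 0 < (x^T *m M *m x) 0 0.

Definition controllable (R : realType) (n m : nat)
  (A : 'M[R]_n) (B : 'M[R]_(n, m)) : Prop :=
  \rank (\mxrow_(k < n) (A ^+ k *m B)) = n.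

Definition observable (R : realType) (n p : nat)
  (A : 'M[R]_n) (C : 'M[R]_(p, n)) : Prop :=
  \rank (\mxcol_(k < n) (C *m A ^+ k)) = n.

Definition cprod (R : realType) (c : nat -> R) (i : nat) : R :=
  \prod_(j < i.+1) c j ^+ 2.

Definition lyap_eq (R : realType) (n m : nat) (A : 'M[R]_n) (B : 'M[R]_(n, m))
  (Q : 'M[R]_n) (Rw : 'M[R]_m) (b : R) (c : nat -> R) (i : nat)
  (K : 'M[R]_(m, n)) (P : 'M[R]_n) : Prop :=
  (cprod c i / b ^+ 2) *: ((A - B *m K)^T *m P *m (A - B *m K))
    - P + Q + K^T *m Rw *m K = 0.

Definition next_gain (R : realType) (n m : nat) (A : 'M[R]_n) (B : 'M[R]_(n, m))
  (Rw : 'M[R]_m) (b : R) (c : nat -> R) (i : nat) (P : 'M[R]_n) : 'M[R]_(m, n) :=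
  invmx (B^T *m P *m B + (b ^+ 2 / cprod c i) *: Rw) *m (B^T *m P *m A).

(* Main.v *)
Require Import Defs.
From HB Require Import structures.
From mathcomp Require Import all_boot all_order all_algebra.
From mathcomp Require Import boolp classical_sets reals topology normedtype derive.
From mathcomp.real_closed Require Import complex.
From mathcomp Require Import ring lra.
Set Implicit Arguments. Unset Strict Implicit. Unset Printing Implicit Defensive.
Import Order.TTheory GRing.Theory Num.Theory.
Import numFieldNormedType.Exports.
Local Open Scope ring_scope.

Section GminSec.
Local Open Scope classical_set_scope.

Definition qv (R : realType) n (M : 'M[R]_n) (v : 'rV[R]_n) := (v *m M *m v^T) 0 0.

Lemma qvE (R : realType) n (M : 'M[R]_n) v :
  qv M v = \sum_j (\sum_i v 0 i * M i j) * v 0 j.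
Proof. by rewrite /qv mxE; apply: eq_bigr => j _; rewrite !mxE. Qed.

Lemma cont_sum (T : topologicalType) (R : realType) (I : finType)
  (F : I -> T -> R) : (forall i, continuous (F i)) ->
  continuous (fun x => \sum_i F i x).
Proof.
move=> Fc.
exact: (@continuous_big R I +%R 0 xpredT add_continuous T (index_enum I) F (fun i _ => Fc i)).
Qed.

Lemma qv_cont (R : realType) n (M : 'M[R]_n) : continuous (qv M).
Proof.
have E : qv M = fun v => \sum_j (\sum_i v 0 i * M i j) * v 0 j.
  by apply: funext => v; rewrite qvE.
rewrite E; apply: cont_sum => j x.
apply: continuousM; last exact: coord_continuous.
have : continuous (fun v : 'rV[R]_n => \sum_i v 0 i * M i j).
  apply: cont_sum => i y /=.
  apply: continuousM; first exact: coord_continuous.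
  exact: cst_continuous.
by move=> /(_ x).
Qed.

Lemma qvZ (R : realType) n (M : 'M[R]_n) a v : qv M (a *: v) = a ^+ 2 * qv M v.
Proof.
rewrite /qv; have -> : (a *: v)^T = a *: v^T by apply/matrixP => i j; rewrite !mxE.
by rewrite -!scalemxAl -scalemxAr !mxE mulrA expr2.
Qed.

Lemma gmin_row (R : realType) n (S T : 'M[R]_n.+1) :
  (forall v : 'rV[R]_n.+1, v != 0 -> 0 < qv T v) ->
  exists2 x : 'rV_n.+1, x != 0 &
    forall y, qv S x * qv T y <= qv S y * qv T x.
Proof.
move=> Tpos.
pose A := [set v : 'rV[R]_n.+1 | `|v| = 1].
pose f := fun v => qv S v / qv T v.
have nrm1 (v : 'rV[R]_n.+1) : v != 0 -> `| `|v|^-1 *: v| = 1.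
  by move=> v0; rewrite normrZ ger0_norm ?invr_ge0 // mulVr // unitfE normr_eq0.
have A0 : A !=set0.
  exists (`|(const_mx 1 : 'rV[R]_n.+1)|^-1 *: const_mx 1).
  rewrite /A /=; apply: nrm1; apply/eqP => /matrixP /(_ 0 0); rewrite !mxE.
  by move/eqP; rewrite oner_eq0.
have Anz v : A v -> v != 0.
  by rewrite /A /= => v1; apply/eqP => v0; move: v1; rewrite v0 normr0 => /eqP; rewrite eq_sym oner_eq0.
have cA : compact A.
  apply: bounded_closed_compact.
    exists 1; split => // M M1 v; rewrite /A /= => ->; exact: ltW.
  apply: (@preimage_closed _ _ (fun v : 'rV[R]_n.+1 => `|v|) [set 1]).
    by move=> v _; apply: norm_continuous.
  exact: closed_eq.
have cf : {within A, continuous f}.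
  apply: continuous_in_subspaceT => v vA.
  apply: continuousM; first exact: qv_cont.
  apply: continuousV; last exact: qv_cont.
  by rewrite gt_eqF // Tpos // Anz //; rewrite inE in vA.
have [x xA xmin] := compact_EVT_min A0 cA cf.
have xA' : A x by rewrite inE in xA.
have x0 := Anz _ xA'.
exists x => // y.
have Tx := Tpos _ x0.
case: (eqVneq y 0) => [->|y0].
  by rewrite /qv !mul0mx !mxE !mulr0 mul0r.
have Ty := Tpos _ y0.
pose z := `|y|^-1 *: y.
have zA : z \in A by rewrite inE; apply: nrm1.
have := xmin _ zA; rewrite /f /z !qvZ.
have a0 : 0 < `|y|^-1 ^+ 2 by rewrite exprn_gt0 // invr_gt0 normr_gt0.
rewrite invfM mulrA (mulrC (_ ^+ 2)) -(mulrA _ (_ ^+ 2)) mulfV ?gt_eqF // mulr1.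
by rewrite ler_pdivrMr // mulrAC ler_pdivlMr.
Qed.

End GminSec.


Section Basic.
Variable R : realType.
Variable n : nat.
Implicit Types (M P U X : 'M[R]_n) (x y u w : 'cV[R]_n).

Definition qf M x := (x^T *m M *m x) 0 0.
Definition n2 x := (x^T *m x) 0 0.
Definition msum M := \sum_i \sum_j `|M i j|.

Lemma bilE u M w :
  (u^T *m M *m w) 0 0 = \sum_i \sum_j u i 0 * M i j * w j 0.
Proof.
rewrite mxE exchange_big /=; apply: eq_bigr => j _.
rewrite !mxE big_distrl /=; apply: eq_bigr => i _.
by rewrite !mxE.
Qed.

Lemma n2E x : n2 x = \sum_i x i 0 ^+ 2.
Proof. by rewrite /n2 mxE; apply: eq_bigr => i _; rewrite !mxE expr2. Qed.

Lemma n2_ge0 x : 0 <= n2 x.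
Proof. by rewrite n2E; apply: sumr_ge0 => i _; rewrite sqr_ge0. Qed.

Lemma n2_eq0 x : n2 x = 0 -> x = 0.
Proof.
rewrite n2E => /psumr_eq0P H; apply/matrixP => i j.
rewrite (ord1 j) mxE; apply/eqP; rewrite -sqrf_eq0; apply/eqP.
by apply: H => // k _; rewrite sqr_ge0.
Qed.

Lemma term_le_sum (I : finType) (F : I -> R) i :
  (forall j, 0 <= F j) -> F i <= \sum_j F j.
Proof.
move=> F0; rewrite (bigD1 i) //= lerDl; apply: sumr_ge0 => j _; exact: F0.
Qed.

Lemma msum_ge0 M : 0 <= msum M.
Proof. by apply: sumr_ge0 => i _; apply: sumr_ge0 => j _. Qed.

Lemma bil_bound u M w :
  `|(u^T *m M *m w) 0 0| <= msum M * (n2 u + n2 w).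
Proof.
rewrite bilE /msum mulr_suml.
apply: (le_trans (ler_norm_sum _ _ _)); apply: ler_sum => i _.
rewrite mulr_suml.
apply: (le_trans (ler_norm_sum _ _ _)); apply: ler_sum => j _.
have hu : u i 0 ^+ 2 <= n2 u.
  by rewrite n2E; exact: (@term_le_sum _ (fun k => u k 0 ^+ 2) _ (fun k => sqr_ge0 _)).
have hw : w j 0 ^+ 2 <= n2 w.
  by rewrite n2E; exact: (@term_le_sum _ (fun k => w k 0 ^+ 2) _ (fun k => sqr_ge0 _)).
rewrite !normrM.
have h1 : `|u i 0| * `|w j 0| <= n2 u + n2 w.
  have a0 := normr_ge0 (u i 0); have b0 := normr_ge0 (w j 0).
  have ea : `|u i 0| ^+ 2 = u i 0 ^+ 2 by rewrite real_normK // num_real.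
  have eb : `|w j 0| ^+ 2 = w j 0 ^+ 2 by rewrite real_normK // num_real.
  nra.
rewrite [_ * `|M i j|]mulrC -mulrA.
by apply: ler_wpM2l => //.
Qed.

Lemma mx11T (a : 'M[R]_1) : a^T 0 0 = a 0 0.
Proof. by rewrite mxE. Qed.

Lemma bilT u M w : (u^T *m M *m w) 0 0 = (w^T *m M^T *m u) 0 0.
Proof. by rewrite -mx11T !trmx_mul trmxK mulmxA. Qed.

Lemma qfD M x y : M^T = M ->
  qf M (x + y) = qf M x + 2 * (y^T *m M *m x) 0 0 + qf M y.
Proof.
move=> MT; rewrite /qf.
have -> : (x + y)^T = x^T + y^T by apply/matrixP => i j; rewrite !mxE.
have E (A B : 'M[R]_1) : (A + B) 0 0 = A 0 0 + B 0 0 by rewrite mxE.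
rewrite !mulmxDl !mulmxDr !E.
rewrite [(x^T *m M *m y) 0 0]bilT MT.
ring.
Qed.


Lemma qfDM M N x : qf (M + N) x = qf M x + qf N x.
Proof. by rewrite /qf mulmxDr mulmxDl mxE. Qed.

Lemma qfNM M x : qf (- M) x = - qf M x.
Proof. by rewrite /qf mulmxN mulNmx mxE. Qed.

Lemma qfBM M N x : qf (M - N) x = qf M x - qf N x.
Proof. by rewrite qfDM qfNM. Qed.

Lemma qfZM a M x : qf (a *: M) x = a * qf M x.
Proof. by rewrite /qf -scalemxAr -scalemxAl mxE. Qed.

Lemma qf_conj (G : 'M[R]_n) M x : qf (G^T *m M *m G) x = qf M (G *m x).
Proof. by rewrite /qf trmx_mul !mulmxA. Qed.

Lemma qf_sum (I : Type) (r : seq I) (F : I -> 'M[R]_n) x :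
  qf (\sum_(k <- r) F k) x = \sum_(k <- r) qf (F k) x.
Proof. by rewrite /qf mulmx_sumr mulmx_suml summxE. Qed.

Lemma qf1 x : qf 1%:M x = n2 x.
Proof. by rewrite /qf mulmx1. Qed.

Lemma qf0 M : qf M 0 = 0.
Proof. by rewrite /qf mulmx0 mxE. Qed.

Lemma trZ (t : R) (v : 'cV[R]_n) : (t *: v)^T = t *: v^T.
Proof. by apply/matrixP => i j; rewrite !mxE. Qed.

Lemma bilZl t (v : 'cV[R]_n) M (z : 'cV[R]_n) : ((t *: v)^T *m M *m z) 0 0 = t * (v^T *m M *m z) 0 0.
Proof. by rewrite trZ -!scalemxAl mxE. Qed.

Lemma qfZv M t (v : 'cV[R]_n) : qf M (t *: v) = t ^+ 2 * qf M v.
Proof. by rewrite /qf bilZl -scalemxAr mxE mulrA expr2. Qed.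

Lemma psd_null M x : M^T = M -> (forall y, 0 <= qf M y) -> qf M x = 0 ->
  M *m x = 0.
Proof.
move=> MT Mge qx.
set v := M *m x.
have a0 := n2_ge0 v.
have b0 := Mge v.
have cross : (v^T *m M *m x) 0 0 = n2 v.
  by rewrite /n2 -mulmxA.
set a := n2 v in a0 cross *; set b := qf M v in b0 *.
pose t := - a / (b + 1).
have h := Mge (x + t *: v).
rewrite qfD // qx add0r bilZl cross qfZv -/b in h.
have b1 : 0 < b + 1 by lra.
have ht : t * (b + 1) = - a by rewrite /t mulfVK // gt_eqF.
have : a = 0 by nra.
by move/n2_eq0.
Qed.

Lemma unit_of_inj M : (forall x, M *m x = 0 -> x = 0) -> M \in unitmx.
Proof.
move=> inj; rewrite -unitmx_tr -row_free_unit -kermx_eq0.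
apply/eqP/row_matrixP => i; rewrite row0.
set r := row i (kermx M^T).
have : r *m M^T = 0 by rewrite /r -row_mul mulmx_ker row0.
move=> /(congr1 trmx); rewrite trmx_mul trmxK trmx0 => /inj.
by move=> /(congr1 trmx); rewrite trmxK trmx0.
Qed.

Lemma posdef_unit M : posdef M -> M \in unitmx.
Proof.
move=> [MT Mp]; apply: unit_of_inj => x Mx.
apply/eqP; apply: contraT => x0.
by have := Mp x x0; rewrite -mulmxA Mx mulmx0 mxE ltxx.
Qed.

End Basic.

Lemma qv_qf (R : realType) n (M : 'M[R]_n) (x : 'cV[R]_n) : qv M x^T = qf M x.
Proof. by rewrite /qv /qf trmxK. Qed.

Lemma trmx_neq0 (R : realType) m n (A : 'M[R]_(m, n)) : A != 0 -> A^T != 0.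
Proof. by apply: contra => /eqP /(congr1 trmx); rewrite trmxK trmx0 => ->. Qed.

Lemma gmin_col (R : realType) n (S T : 'M[R]_n.+1) :
  (forall x, x != 0 -> 0 < qf T x) ->
  exists2 x, x != 0 & forall y, qf S x * qf T y <= qf S y * qf T x.
Proof.
move=> Tp.
have [v v0 H] : exists2 v : 'rV[R]_n.+1, v != 0 & forall y, qv S v * qv T y <= qv S y * qv T v.
  apply: gmin_row => v v0; rewrite -[v]trmxK qv_qf; apply: Tp.
  exact: trmx_neq0.
exists v^T; first exact: trmx_neq0.
by move=> y; have := H y^T; rewrite !qv_qf -[v]trmxK !qv_qf trmxK.
Qed.

Lemma n2_gt0 (R : realType) n (x : 'cV[R]_n) : x != 0 -> 0 < n2 x.
Proof.
move=> x0; rewrite lt_def n2_ge0 andbT; apply/eqP => /n2_eq0 /eqP.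
by rewrite (negbTE x0).
Qed.

Lemma coercive (R : realType) n (U : 'M[R]_n) : posdef U ->
  exists2 C, 0 < C & forall y, n2 y <= C * qf U y.
Proof.
case: n U => [|n] U [UT Up].
  exists 1 => // y; rewrite n2E /qf bilE !big_ord0 mulr0 //.
have T1 : forall x : 'cV[R]_n.+1, x != 0 -> 0 < qf 1%:M x.
  by move=> x x0; rewrite qf1 n2_gt0.
have [x x0 H] := gmin_col U T1.
have a0 : 0 < qf U x by apply: Up.
have c0 := n2_gt0 x0.
exists (n2 x / qf U x); first exact: divr_gt0.
move=> y; have := H y; rewrite !qf1 => h.
rewrite mulrAC ler_pdivlMr //.
by rewrite mulrC (mulrC (n2 x)).
Qed.


Section Stab.
Variable R : realType.
Variable n : nat.
Implicit Types (M P U X W G H : 'M[R]_n) (x y u w : 'cV[R]_n).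

Lemma mxexpS G k : G ^+ k.+1 = G ^+ k *m G.
Proof. by rewrite exprSr mulmxE. Qed.

Lemma mxexpS' G k : G ^+ k.+1 = G *m G ^+ k.
Proof. by rewrite exprS mulmxE. Qed.

Lemma tel G M N : M - (G ^+ N)^T *m M *m G ^+ N =
  \sum_(k < N) (G ^+ k)^T *m (M - G^T *m M *m G) *m G ^+ k.
Proof.
elim: N => [|N IH]; first by rewrite big_ord0 expr0 trmx1 mul1mx mulmx1 subrr.
rewrite big_ord_recr /= -IH mxexpS' trmx_mul.
rewrite mulmxBr mulmxBl !mulmxA.
by rewrite addrA subrK.
Qed.

Lemma qf_tel G M N x : qf M x - qf M (G ^+ N *m x) =
  \sum_(k < N) qf (M - G^T *m M *m G) (G ^+ k *m x).
Proof.
rewrite -qf_conj -qfBM tel qf_sum; apply: eq_bigr => k _.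
by rewrite qf_conj.
Qed.

Lemma orbit_bound P H x N : (forall y, 0 <= qf P y) ->
  \sum_(k < N) qf (P - H^T *m P *m H) (H ^+ k *m x) <= qf P x.
Proof.
move=> Pp; rewrite -qf_tel lerBlDr lerDl; exact: Pp.
Qed.

Lemma archi_zero (a K : R) : 0 <= a -> (forall N : nat, N%:R * a <= K) -> a = 0.
Proof.
move=> a0 H; apply/eqP; rewrite eq_le a0 andbT; apply/negP => /negP.
rewrite -ltNge => ap.
have K0 : 0 <= K by have := H 0%N; rewrite mul0r.
have := archi_boundP (divr_ge0 K0 (ltW ap)).
set N := Num.Def.archi_bound _ => hN.
have := H N; rewrite -ler_pdivlMr //; rewrite leNgt hN //.
Qed.

Lemma iterX G X : X = G^T *m X *m G -> forall k, X = (G ^+ k)^T *m X *m G ^+ k.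
Proof.
move=> XG; elim => [|k IH]; first by rewrite expr0 trmx1 mul1mx mulmx1.
rewrite mxexpS.
have -> : (G ^+ k *m G)^T *m X *m (G ^+ k *m G) =
  G^T *m ((G ^+ k)^T *m X *m G ^+ k) *m G by rewrite trmx_mul !mulmxA.
by rewrite -IH -XG.
Qed.

Lemma delta_bil X (i j : 'I_n) :
  ((delta_mx i 0 : 'cV[R]_n)^T *m X *m (delta_mx j 0 : 'cV[R]_n)) 0 0 = X i j.
Proof. by rewrite trmx_delta -rowE -colE !mxE. Qed.

Lemma inj_core P H X : posdef P -> posdef (P - H^T *m P *m H) ->
  X = H^T *m X *m H -> X = 0.
Proof.
move=> [PT Pp] Upd XH.
have [C C0 HC] := coercive Upd.
have Pge y : 0 <= qf P y.
  case: (eqVneq y 0) => [->|y0]; first by rewrite qf0.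
  exact: ltW (Pp y y0).
set U := P - H^T *m P *m H in Upd HC.
have Uge y : 0 <= qf U y.
  case: (eqVneq y 0) => [->|y0]; first by rewrite qf0.
  exact: ltW (Upd.2 y y0).
have key u w N : N%:R * `|(u^T *m X *m w) 0 0| <=
    msum X * C * (qf P u + qf P w).
  have e k : `|(u^T *m X *m w) 0 0| <=
      msum X * C * (qf U (H ^+ k *m u) + qf U (H ^+ k *m w)).
    rewrite {1}(iterX XH k) !mulmxA -trmx_mul -[_ *m H ^+ k *m w]mulmxA.
    apply: (le_trans (bil_bound _ _ _)).
    rewrite -mulrA; apply: ler_wpM2l; first exact: msum_ge0.
    rewrite mulrDr; apply: lerD; [exact: HC | exact: HC].
  have h : \sum_(k < N) `|(u^T *m X *m w) 0 0| <=
     \sum_(k < N) (msum X * C * (qf U (H ^+ k *m u) + qf U (H ^+ k *m w))).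
    by apply: ler_sum => k _; exact: e.
  move: h; rewrite sumr_const card_ord -[_ *+ N]mulr_natl => h.
  apply: (le_trans h); rewrite -mulr_sumr; apply: ler_wpM2l.
    by apply: mulr_ge0; [exact: msum_ge0 | exact: ltW].
  rewrite big_split /=; apply: lerD; exact: orbit_bound.
apply/matrixP => i j; rewrite mxE.
apply/normr0_eq0.
apply: (@archi_zero _ (msum X * C * (qf P (delta_mx i 0) + qf P (delta_mx j 0)))).
  exact: normr_ge0.
by move=> N; have := key (delta_mx i 0) (delta_mx j 0) N; rewrite delta_bil.
Qed.


Lemma posdef_ge P y : posdef P -> 0 <= qf P y.
Proof.
move=> [_ Pp]; case: (eqVneq y 0) => [->|y0]; first by rewrite qf0.
exact: ltW (Pp y y0).
Qed.

Lemma posdef_core P H X : posdef P -> posdef (P - H^T *m P *m H) ->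
  X^T = X -> posdef (X - H^T *m X *m H) -> posdef X.
Proof.
move=> Ppd Upd XT Vpd; split => // x x0.
rewrite ltNge; apply/negP => Xle; move: Xle; rewrite -/(qf X x) => Xle.
have [C C0 HC] := coercive Upd.
set U := P - H^T *m P *m H in Upd HC.
set V := X - H^T *m X *m H in Vpd.
have a0 : 0 < qf V x by apply: Vpd.2.
set a := qf V x in a0.
set y := H *m x.
have step k : a <= msum X * 2 * C * qf U (H ^+ k *m y).
  have h1 : qf X x - qf X (H ^+ k *m y) >= a.
    rewrite /y mulmxA -mxexpS qf_tel big_ord_recl /= expr0 mul1mx.
    rewrite lerDl; apply: sumr_ge0 => j _; exact: posdef_ge.
  have h2 : `|qf X (H ^+ k *m y)| <= msum X * (n2 (H ^+ k *m y) + n2 (H ^+ k *m y)).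
    exact: bil_bound.
  have h3 := HC (H ^+ k *m y).
  have m0 := msum_ge0 X.
  have h4 : - qf X (H ^+ k *m y) <= `|qf X (H ^+ k *m y)|.
    by rewrite -normrN ler_norm.
  have h5 : msum X * (n2 (H ^+ k *m y) + n2 (H ^+ k *m y)) <=
      msum X * (2 * (C * qf U (H ^+ k *m y))).
    by apply: ler_wpM2l => //; lra.
  move: h5; rewrite !mulrA => h5.
  lra.
suff : a = 0 by move=> az; move: a0; rewrite az ltxx.
apply: (@archi_zero a (msum X * 2 * C * qf P y)); first exact: ltW.
move=> N.
have h : \sum_(k < N) a <= \sum_(k < N) (msum X * 2 * C * qf U (H ^+ k *m y)).
  by apply: ler_sum => k _; exact: step.
move: h; rewrite sumr_const card_ord -[_ *+ N]mulr_natl -mulr_sumr => h.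
apply: (le_trans h); apply: ler_wpM2l.
  by apply: mulr_ge0; [apply: mulr_ge0; [exact: msum_ge0|] | exact: ltW].
apply: orbit_bound => z; exact: posdef_ge.
Qed.

Lemma cert_pow P H m : (0 < m)%N -> posdef P -> posdef (P - H^T *m P *m H) ->
  posdef (P - (H ^+ m)^T *m P *m H ^+ m).
Proof.
case: m => // m _ Ppd Upd; split.
  rewrite linearB /= !trmx_mul trmxK Ppd.1 mulmxA //.
move=> x x0; change (0 < qf (P - (H ^+ m.+1)^T *m P *m H ^+ m.+1) x).
rewrite tel qf_sum big_ord_recl /= expr0 trmx1 mul1mx mulmx1.
apply: (lt_le_trans (Upd.2 x x0)); rewrite lerDl.
by apply: sumr_ge0 => j _; rewrite qf_conj; exact: posdef_ge.
Qed.


Definition lyapf G X := X - G^T *m X *m G.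

Fact lyapf_lin G : linear (lyapf G).
Proof.
move=> a X Y; rewrite /lyapf mulmxDr mulmxDl -scalemxAr -scalemxAl.
by rewrite scalerBr opprD addrACA.
Qed.

HB.instance Definition _ G :=
  GRing.isLinear.Build R 'M[R]_n 'M[R]_n _ (lyapf G) (lyapf_lin G).

Lemma lyap_surj G : (forall X, X - G^T *m X *m G = 0 -> X = 0) ->
  forall W, exists X, X - G^T *m X *m G = W.
Proof.
move=> inj W.
set Mf := lin_mx (lyapf G).
have uM : Mf \in unitmx.
  rewrite -row_free_unit -kermx_eq0.
  apply/eqP/row_matrixP => i; rewrite row0.
  set r := row i (kermx Mf).
  have h : r *m Mf = 0 by rewrite /r -row_mul mulmx_ker row0.
  move: h; rewrite /Mf mul_rV_lin => /(congr1 vec_mx); rewrite mxvecK.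
  have -> : vec_mx (0 : 'rV[R]_(n * n)) = 0 :> 'M[R]_n.
    by apply/matrixP => a b; rewrite !mxE.
  move=> /inj h; rewrite -[r]vec_mxK h.
  by rewrite linear0.
exists (vec_mx (mxvec W *m invmx Mf)).
have -> : vec_mx (mxvec W *m invmx Mf) - G^T *m vec_mx (mxvec W *m invmx Mf) *m G
   = lyapf G (vec_mx (mxvec W *m invmx Mf)) by [].
by rewrite -mx_vec_lin vec_mxK mulmxKV // mxvecK.
Qed.

Lemma sum_widen (f : nat -> R) m m' : (m <= m')%N -> (forall k, 0 <= f k) ->
  \sum_(k < m) f k <= \sum_(k < m') f k.
Proof.
move=> le f0; rewrite -!(big_mkord xpredT) (big_cat_nat (leq0n m) le) /=.
by rewrite lerDl; apply: sumr_ge0.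
Qed.

Lemma stab G P N : (0 < N)%N -> posdef P ->
  posdef (P - (G ^+ N)^T *m P *m G ^+ N) ->
  [/\ (forall X, X - G^T *m X *m G = 0 -> X = 0),
      (forall W, exists X, X - G^T *m X *m G = W) &
      (forall W X, W^T = W -> (forall y, 0 <= qf W y) ->
         posdef (\sum_(k < n) (G ^+ k)^T *m W *m G ^+ k) ->
         X - G^T *m X *m G = W -> posdef X)].
Proof.
move=> N0 Ppd Cpd.
have inj : forall X, X - G^T *m X *m G = 0 -> X = 0.
  move=> X /eqP; rewrite subr_eq0 => /eqP XG.
  apply: (inj_core Ppd Cpd); exact: iterX.
split => //; first exact: lyap_surj.
move=> W X WT Wge Wpd XW.
have XT : X^T = X.
  have hY : X^T - G^T *m X^T *m G = W.
    by rewrite -WT -XW linearB /= !trmx_mul trmxK mulmxA.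
  have h : lyapf G (X - X^T) = 0 by rewrite linearB /= /lyapf XW hY subrr.
  by move/inj/eqP: h; rewrite subr_eq0 => /eqP.
have E := N * n.+1.
set H := G ^+ (N * n.+1).
have HC : posdef (P - H^T *m P *m H).
  by rewrite /H exprM; apply: cert_pow.
apply: (posdef_core Ppd HC XT); split.
  by rewrite linearB /= !trmx_mul trmxK XT mulmxA.
move=> x x0.
change (0 < qf (X - H^T *m X *m H) x).
rewrite /H tel XW qf_sum.
apply: (lt_le_trans (Wpd.2 x x0)).
change (qf (\sum_(k < n) (G ^+ k)^T *m W *m G ^+ k) x <=
  \sum_(i < N * n.+1) qf ((G ^+ i)^T *m W *m G ^+ i) x).
rewrite qf_sum.
apply: (@sum_widen (fun k => qf ((G ^+ k)^T *m W *m G ^+ k) x)).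
  by rewrite -[X in (X <= _)%N]mul1n leq_mul // ltnW.
by move=> k; rewrite qf_conj.
Qed.

End Stab.


Section Step.
Variable R : realType.

Lemma entD p q (X Y : 'M[R]_(p, q)) i j : (X + Y) i j = X i j + Y i j.
Proof. by rewrite mxE. Qed.
Lemma entN p q (X : 'M[R]_(p, q)) i j : (- X) i j = - X i j.
Proof. by rewrite mxE. Qed.
Lemma ent0 p q i j : (0 : 'M[R]_(p, q)) i j = 0.
Proof. by rewrite mxE. Qed.
Lemma entZ p q a (X : 'M[R]_(p, q)) i j : (a *: X) i j = a * X i j.
Proof. by rewrite mxE. Qed.

Lemma expandQ p q (X Y : 'M[R]_(p, q)) (M : 'M[R]_p) :
  (X - Y)^T *m M *m (X - Y) =
  X^T *m M *m X - X^T *m M *m Y - Y^T *m M *m X + Y^T *m M *m Y.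
Proof.
have -> : (X - Y)^T = X^T - Y^T by apply/matrixP => i j; rewrite !mxE.
rewrite mulmxBl mulmxBr !mulmxBl.
apply/matrixP => i j; rewrite !(entD, entN); ring.
Qed.

Variables (n m : nat) (A : 'M[R]_n) (B : 'M[R]_(n, m)) (Q : 'M[R]_n)
  (Rw : 'M[R]_m).

Lemma complete_sq (P : 'M[R]_n) (K : 'M[R]_(m, n)) (s : R) :
  s != 0 -> P^T = P -> Rw^T = Rw ->
  B^T *m P *m B + s^-1 *: Rw \in unitmx ->
  s *: ((A - B *m K)^T *m P *m (A - B *m K)) - P + Q + K^T *m Rw *m K = 0 ->
  let K' := invmx (B^T *m P *m B + s^-1 *: Rw) *m (B^T *m P *m A) in
  P - s *: ((A - B *m K')^T *m P *m (A - B *m K')) =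
  Q + K'^T *m Rw *m K' +
  (K - K')^T *m (s *: (B^T *m P *m B) + Rw) *m (K - K').
Proof.
move=> s0 PT RT Mu hyp; cbv zeta.
set M := B^T *m P *m B + s^-1 *: Rw in Mu *.
set K' := invmx M *m (B^T *m P *m A).
set M' := s *: (B^T *m P *m B) + Rw.
have MM : M' = s *: M by rewrite /M scalerDr scalerA mulfV // scale1r.
have MK : M *m K' = B^T *m P *m A by rewrite /K' mulKVmx.
have MKs : M' *m K' = s *: (B^T *m P *m A) by rewrite MM -scalemxAl MK.
have MT : M'^T = M'.
  by rewrite /M' linearD /= linearZ /= !trmx_mul trmxK PT RT mulmxA.
have MKsT : K'^T *m M' = s *: (A^T *m P *m B).
  have := congr1 trmx MKs; rewrite trmx_mul MT linearZ /= !trmx_mul trmxK PT.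
  by rewrite mulmxA.
have ex L : s *: ((A - B *m L)^T *m P *m (A - B *m L)) =
    s *: (A^T *m P *m A) - K'^T *m M' *m L - L^T *m M' *m K'
    + L^T *m M' *m L - L^T *m Rw *m L.
  rewrite -[A - B *m L]/(A - B *m L) (expandQ A (B *m L) P).
  rewrite [(B *m L)^T]trmx_mul.
  have e1 : K'^T *m M' *m L = s *: (A^T *m P *m (B *m L)).
    by rewrite MKsT -scalemxAl !mulmxA.
  have e2 : L^T *m M' *m K' = s *: (L^T *m B^T *m P *m A).
    by rewrite -mulmxA MKs -scalemxAr !mulmxA.
  have e3 : L^T *m M' *m L = s *: (L^T *m B^T *m P *m (B *m L)) + L^T *m Rw *m L.
    by rewrite /M' mulmxDr mulmxDl -scalemxAr -scalemxAl !mulmxA.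
  rewrite e1 e2 e3.
  apply/matrixP => i j; rewrite !(entD, entN, entZ); ring.
rewrite (ex K) in hyp.
rewrite (ex K') expandQ.
apply/matrixP => i j.
have := congr1 (fun X : 'M[R]_n => X i j) hyp.
rewrite !(entD, entN, entZ) ent0 => h.
lra.
Qed.


Lemma trmx_sumk (N : nat) (F : 'I_N -> 'M[R]_n) :
  (\sum_(k < N) F k)^T = \sum_(k < N) (F k)^T.
Proof. by apply/matrixP => i j; rewrite !mxE !summxE; apply: eq_bigr => k _; rewrite mxE. Qed.

Lemma obs_core (sqrtQ : 'M[R]_n) (K : 'M[R]_(m, n)) (a : R) (x : 'cV[R]_n) :
  a != 0 -> observable A sqrtQ ->
  (forall k, (k < n)%N -> sqrtQ *m ((a *: (A - B *m K)) ^+ k *m x) = 0 /\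
                           K *m ((a *: (A - B *m K)) ^+ k *m x) = 0) ->
  x = 0.
Proof.
move=> a0 obs H.
set G := a *: (A - B *m K) in H.
have E : forall k, (k <= n)%N -> G ^+ k *m x = a ^+ k *: (A ^+ k *m x).
  elim => [|k IH] kn; first by rewrite !expr0 mul1mx scale1r.
  rewrite mxexpS' -mulmxA IH 1?ltnW //.
  have KA : K *m (A ^+ k *m x) = 0.
    have := (H k kn).2; rewrite IH 1?ltnW // -scalemxAr => /eqP.
    by rewrite scaler_eq0 expf_eq0 (negbTE a0) andbF /= => /eqP.
  rewrite /G -scalemxAl -scalemxAr mulmxBl -mulmxA KA mulmx0 subr0.
  by rewrite scalerA -exprS mulmxA -mxexpS'.
have SA : forall k, (k < n)%N -> sqrtQ *m (A ^+ k *m x) = 0.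
  move=> k kn; have := (H k kn).1; rewrite E 1?ltnW // -scalemxAr => /eqP.
  by rewrite scaler_eq0 expf_eq0 (negbTE a0) andbF /= => /eqP.
set O := \mxcol_(k < n) (sqrtQ *m A ^+ k).
have Ox : O *m x = 0.
  rewrite /O mxcol_mul.
  rewrite (eq_mxcol (B_ := fun k : 'I_n => (0 : 'M[R]_(n, 1)))); first by rewrite mxcol0.
  by move=> k; rewrite -mulmxA SA.
have fr : row_free O^T by rewrite -row_leq_rank mxrank_tr obs.
have : x^T *m O^T == 0 by rewrite -trmx_mul Ox trmx0.
by rewrite mulmx_free_eq0 // => /eqP /(congr1 trmx); rewrite trmxK trmx0.
Qed.


Lemma W_props (sqrtQ : 'M[R]_n) (K : 'M[R]_(m, n)) (D : 'M[R]_n) :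
  psd sqrtQ -> sqrtQ *m sqrtQ = Q -> posdef Rw -> psd D ->
  let W := Q + K^T *m Rw *m K + D in
  [/\ W^T = W, forall y, 0 <= qf W y &
      forall y, qf W y = 0 -> sqrtQ *m y = 0 /\ K *m y = 0].
Proof.
move=> [ST Sp] sQ [RT Rp] [DT Dp] W.
have qQ (y : 'cV[R]_n) : qf Q y = n2 (sqrtQ *m y).
  by rewrite /qf /n2 -sQ trmx_mul ST !mulmxA.
have qK (y : 'cV[R]_n) : qf (K^T *m Rw *m K) y = ((K *m y)^T *m Rw *m (K *m y)) 0 0.
  by rewrite /qf trmx_mul !mulmxA.
have qKge (y : 'cV[R]_n) : 0 <= ((K *m y)^T *m Rw *m (K *m y)) 0 0.
  case: (eqVneq (K *m y) 0) => [->|h]; first by rewrite mulmx0 mxE.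
  exact: ltW (Rp _ h).
have qW (y : 'cV[R]_n) : qf W y = n2 (sqrtQ *m y) + ((K *m y)^T *m Rw *m (K *m y)) 0 0 + qf D y.
  by rewrite /W !qfDM qQ qK.
split.
- by rewrite /W !linearD /= DT !trmx_mul trmxK RT mulmxA -sQ trmx_mul ST.
- move=> y; rewrite qW; apply: addr_ge0; [apply: addr_ge0|]; [exact: n2_ge0|exact: qKge|exact: Dp].
- move=> y; rewrite qW => h.
  have h1 := n2_ge0 (sqrtQ *m y); have h2 := qKge y; have h3 := Dp y.
  rewrite -/(qf D y) in h3.
  have e1 : n2 (sqrtQ *m y) = 0 by lra.
  have e2 : ((K *m y)^T *m Rw *m (K *m y)) 0 0 = 0 by lra.
  split; first exact: n2_eq0.
  apply/eqP; apply: contraT => ne; have := Rp _ ne; rewrite e2 ltxx //.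
Qed.

Lemma obs_pd (sqrtQ : 'M[R]_n) (K : 'M[R]_(m, n)) (a : R) (D : 'M[R]_n) :
  a != 0 -> psd sqrtQ -> sqrtQ *m sqrtQ = Q -> posdef Rw -> psd D ->
  observable A sqrtQ ->
  posdef (\sum_(k < n) ((a *: (A - B *m K)) ^+ k)^T *m
            (Q + K^T *m Rw *m K + D) *m (a *: (A - B *m K)) ^+ k).
Proof.
move=> a0 Sp sQ Rpd Dp obs.
have [WT Wge Wz] := W_props K Sp sQ Rpd Dp.
set W := Q + K^T *m Rw *m K + D in WT Wge Wz *.
set G := a *: (A - B *m K).
split.
  rewrite trmx_sumk; apply: eq_bigr => k _.
  by rewrite !trmx_mul trmxK WT mulmxA.
move=> x x0.
change (0 < qf (\sum_(k < n) (G ^+ k)^T *m W *m G ^+ k) x).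
rewrite qf_sum.
rewrite lt_def; apply/andP; split; last first.
  by apply: sumr_ge0 => k _; rewrite qf_conj.
apply/eqP => hs.
have z : forall k : 'I_n, qf W (G ^+ k *m x) = 0.
  move=> k; rewrite -qf_conj; apply: (psumr_eq0P _ hs) => // j _.
  by rewrite qf_conj.
move/negP: x0; apply; apply/eqP.
apply: (obs_core a0 obs) => k kn.
exact: (Wz _ (z (Ordinal kn))).
Qed.

End Step.


Lemma psd_unit_pd (R : realType) n (M : 'M[R]_n) :
  M^T = M -> (forall y, 0 <= qf M y) -> M \in unitmx ->
  forall x, x != 0 -> 0 < qf M x.
Proof.
move=> MT Mge Mu x x0; rewrite lt_def Mge andbT; apply/eqP => h.
have := psd_null MT Mge h => /(congr1 (mulmx (invmx M))).
by rewrite mulKmx // mulmx0 => /eqP; rewrite (negbTE x0).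
Qed.

Lemma gen_eig (R : realType) n (S T : 'M[R]_n.+1) :
  S^T = S -> T^T = T -> (forall x, x != 0 -> 0 < qf T x) ->
  exists2 x, x != 0 & exists mu : R,
    [/\ mu = qf S x / qf T x, S *m x = mu *: (T *m x) &
        forall y, mu * qf T y <= qf S y].
Proof.
move=> ST TT Tp.
have [x x0 H] := gmin_col S Tp.
have Tx := Tp x x0.
set mu := qf S x / qf T x.
have Hy y : mu * qf T y <= qf S y.
  by rewrite /mu mulrAC ler_pdivrMr // H.
exists x => //; exists mu; split => //.
set M0 := S - mu *: T.
have M0T : M0^T = M0 by rewrite /M0 linearB /= linearZ /= ST TT.
have M0ge y : 0 <= qf M0 y by rewrite /M0 qfBM qfZM subr_ge0.
have M0x : qf M0 x = 0 by rewrite /M0 qfBM qfZM /mu divfK ?subrr // gt_eqF.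
have := psd_null M0T M0ge M0x.
by rewrite /M0 mulmxBl -scalemxAl => /eqP; rewrite subr_eq0 => /eqP.
Qed.

Lemma sigma_cond (R : realType) n (P Qc : 'M[R]_n) (c : R) :
  posdef P -> Qc^T = Qc -> (forall y, 0 <= qf Qc y) -> Qc \in unitmx ->
  1 < c -> c < Num.sqrt (min_singular_value (P *m invmx Qc)) ->
  posdef (P - c ^+ 2 *: Qc).
Proof.
move=> [PT Pp] QT Qge Qu c1 cs.
have symm : (P - c ^+ 2 *: Qc)^T = P - c ^+ 2 *: Qc.
  by rewrite linearB /= linearZ /= PT QT.
split => // z z0.
case: n P Qc z z0 PT Pp QT Qge Qu cs symm => [|n] P Qc z z0 PT Pp QT Qge Qu cs symm.
  by move: z0; rewrite [z]flatmx0 eqxx.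
change (0 < qf (P - c ^+ 2 *: Qc) z).
have QcP := psd_unit_pd QT Qge Qu.
have [x x0 [mu [mu_def Px Hmu]]] := gen_eig PT QT QcP.
have mu0 : 0 < mu by rewrite mu_def divr_gt0 // ?QcP //; exact: Pp.
set Y := P *m invmx Qc.
set S := Y^T *m Y.
have ST : S^T = S by rewrite /S trmx_mul trmxK.
set u := Qc *m x.
have u0 : u != 0.
  apply: contra x0 => /eqP u0; apply/eqP.
  by rewrite -(mulKmx Qu x) -/u u0 mulmx0.
have Yu : Y *m u = mu *: u.
  by rewrite /Y /u mulmxA -(mulmxA P) mulVmx // mulmx1 Px.
have qSu : qf S u = mu ^+ 2 * n2 u.
  rewrite /S -(mulmx1 Y^T) qf_conj Yu -qf1 qfZv //.
have Ip : forall x : 'cV[R]_n.+1, x != 0 -> 0 < qf 1%:M x.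
  by move=> y y0; rewrite qf1 n2_gt0.
have I1 : (1%:M : 'M[R]_n.+1)^T = 1%:M by apply/matrixP => i j; rewrite !mxE eq_sym.
have GE := gen_eig ST I1 Ip.
have [w w0 [lam [lam_def Sw Hlam]]] := GE.
have eig : eigenvalue S lam.
  apply/eigenvalueP; exists w^T; last exact: trmx_neq0.
  by rewrite -{1}ST -trmx_mul Sw mul1mx linearZ.
set E := [set a : R | eigenvalue S a]%classic.
have Elb : lbound E 0.
  move=> a /eigenvalueP [v vS v0].
  have h1 : qf S v^T = a * n2 v^T.
    by rewrite /qf /n2 trmxK vS -scalemxAl mxE.
  have h2 : 0 <= qf S v^T by rewrite /S -(mulmx1 Y^T) qf_conj qf1 n2_ge0.
  have h3 := n2_gt0 (trmx_neq0 v0).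
  by move: h2; rewrite h1 pmulr_lge0.
have infle : inf E <= lam by apply: (ge_inf (ex_intro _ 0 Elb)).
have h4 := Hlam u; rewrite qf1 qSu in h4.
have nu := n2_gt0 u0.
have cE : c ^+ 4 < inf E.
  move: cs; rewrite /min_singular_value -/S -/E => cs.
  have c0 : 0 < c by lra.
  set m1 := Num.sqrt (inf E) in cs.
  have m1p : 0 < m1.
    rewrite -sqrtr_gt0; apply: (lt_trans _ cs); exact: c0.
  have h5 : c ^+ 2 < m1.
    by rewrite -ltr_sqrt // sqrtr_sqr ger0_norm // ltW.
  have iEp : 0 < inf E by rewrite -sqrtr_gt0.
  have h6 : (c ^+ 2) ^+ 2 < inf E.
    rewrite -ltr_sqrt // sqrtr_sqr ger0_norm //.
    exact: exprn_ge0 (ltW c0).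
  by rewrite -exprM in h6.
have cmu : c ^+ 2 < mu.
  have h7 : c ^+ 4 * n2 u < mu ^+ 2 * n2 u.
    apply: (lt_le_trans (y := inf E * n2 u)); first by rewrite ltr_pM2r.
    apply: (le_trans (y := lam * n2 u)); last exact: h4.
    by rewrite ler_pM2r.
  rewrite ltr_pM2r // in h7.
  have c0 : 0 < c by lra.
  nra.
rewrite qfBM qfZM.
have hz := Hmu z; have qz := QcP z z0.
nra.
Qed.


Section Cx.
Variable R : realType.
Local Notation C := (R[i]).

Lemma normC_cmod (z : C) : `|z| = ((cmod z)%:C)%C.
Proof. by rewrite normc_def. Qed.

Lemma cmod_ge0 (z : C) : 0 <= cmod z.
Proof. exact: sqrtr_ge0. Qed.

Lemma cmodD (x y : C) : cmod (x + y) <= cmod x + cmod y.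
Proof.
have := ler_normD x y; rewrite !normC_cmod -rmorphD /=.
by rewrite lecR.
Qed.

Lemma cmodM (x y : C) : cmod (x * y) = cmod x * cmod y.
Proof.
have := normrM x y; rewrite !normC_cmod -rmorphM /=.
by move/complexI.
Qed.

Lemma cmodR (x : R) : cmod ((x%:C)%C) = `|x|.
Proof. by rewrite /cmod /= expr0n /= addr0 sqrtr_sqr. Qed.

Lemma cmod0 : cmod (0 : C) = 0.
Proof. by rewrite -[0 : C]/((0 : R)%:C)%C cmodR normr0. Qed.

Definition sz p q (Y : 'M[C]_(p, q)) := \sum_i \sum_j cmod (Y i j).

Lemma sz_ge0 p q (Y : 'M[C]_(p, q)) : 0 <= sz Y.
Proof. by apply: sumr_ge0 => i _; apply: sumr_ge0 => j _; exact: cmod_ge0. Qed.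

Lemma szD p q (Y Z : 'M[C]_(p, q)) : sz (Y + Z) <= sz Y + sz Z.
Proof.
rewrite /sz -big_split /=; apply: ler_sum => i _.
rewrite -big_split /=; apply: ler_sum => j _; rewrite mxE; exact: cmodD.
Qed.

Lemma szZ p q (r : C) (Y : 'M[C]_(p, q)) : sz (r *: Y) = cmod r * sz Y.
Proof.
rewrite /sz mulr_sumr; apply: eq_bigr => i _; rewrite mulr_sumr.
by apply: eq_bigr => j _; rewrite mxE cmodM.
Qed.

Lemma sz0 p q : sz (0 : 'M[C]_(p, q)) = 0.
Proof. by rewrite /sz big1 // => i _; rewrite big1 // => j _; rewrite mxE cmod0. Qed.

Definition tends0 p q (u : nat -> 'M[C]_(p, q)) :=
  forall e : R, 0 < e -> exists N, forall k, (N <= k)%N -> sz (u k) <= e.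

Lemma bernoulli (h : R) j : 0 <= h -> 1 + j%:R * h <= (1 + h) ^+ j.
Proof.
move=> h0; elim: j => [|j IH]; first by rewrite mul0r addr0 expr0.
rewrite exprS; have h1 : 0 <= (1 + h) ^+ j by apply: exprn_ge0; lra.
have : 1 + j%:R * h <= (1 + h) ^+ j := IH.
rewrite -natr1 => IH'.
have hj : 0 <= j%:R * h by apply: mulr_ge0.
nra.
Qed.

Lemma pow_small (rho K d : R) : 0 <= rho < 1 -> 0 <= K -> 0 < d ->
  exists J, forall j, (J <= j)%N -> rho ^+ j * K <= d.
Proof.
move=> /andP [r0 r1] K0 d0.
have [->|rp] := eqVneq rho 0.
  by exists 1%N => j j1; rewrite expr0n; case: j j1 => // j _; rewrite mul0r ltW.
have rpos : 0 < rho by rewrite lt_def rp.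
set h := rho^-1 - 1.
have h0 : 0 < h by rewrite /h subr_gt0 invf_gt1.
pose J := Num.Def.archi_bound (K / (d * h)).
exists J => j Jj.
have hJ := archi_boundP (divr_ge0 K0 (ltW (mulr_gt0 d0 h0))).
have Jj' : (J%:R : R) <= j%:R by rewrite ler_nat.
have B := bernoulli j (ltW h0).
have e1 : 1 + h = rho^-1 by rewrite /h addrC subrK.
rewrite e1 exprVn in B.
have rj : 0 < rho ^+ j by apply: exprn_gt0.
have : K < j%:R * (d * h).
  by rewrite -ltr_pdivrMr ?mulr_gt0 //; apply: (lt_le_trans hJ).
move=> Kj.
have : rho ^+ j * (1 + j%:R * h) <= 1.
  apply: (le_trans (y := rho ^+ j * rho ^- j)); last by rewrite mulfV // lt0r_neq0.
  by rewrite ler_wpM2l // ltW.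
move=> hh.
have Kj' : K < (j%:R * h) * d by rewrite mulrAC -mulrA.
set t := rho ^+ j in rj hh *; set jh := j%:R * h in hh Kj' *.
have p1 : 0 < (jh * d - K) * t by apply: mulr_gt0 => //; lra.
have p2 : 0 <= (1 - t * (1 + jh)) * d by apply: mulr_ge0; lra.
nra.
Qed.


Lemma scal_dec p q (u v : nat -> 'M[C]_(p, q)) (r : C) : cmod r < 1 ->
  (forall k, u k.+1 = r *: u k + v k) -> tends0 v -> tends0 u.
Proof.
move=> r1 rec tv e e0.
set rho := cmod r in r1.
have rho0 : 0 <= rho := cmod_ge0 r.
have d0 : 0 < e * (1 - rho) / 2 by apply: divr_gt0 => //; apply: mulr_gt0; lra.
have [N1 HN1] := tv _ d0.
set t := sz (u N1).
have claim : forall j, sz (u (N1 + j)%N) <= rho ^+ j * t + e / 2.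
  elim => [|j IH]; first by rewrite addn0 expr0 mul1r lerDl; lra.
  rewrite addnS rec.
  apply: (le_trans (szD _ _)); rewrite szZ -/rho.
  have hv := HN1 (N1 + j)%N (leq_addr _ _).
  have := ler_wpM2l rho0 IH; rewrite exprS.
  move=> h; have t0 : 0 <= t by exact: sz_ge0.
  set a := sz (u (N1 + j)%N) in IH h *.
  set b := sz (v (N1 + j)%N) in hv *.
  nra.
have [J HJ] := pow_small (rho := rho) (K := t) (d := e / 2) (ltac:(by rewrite rho0 r1)) (sz_ge0 _) (ltac:(lra)).
exists (N1 + J)%N => k kN.
have -> : k = (N1 + (k - N1))%N by rewrite subnKC // (leq_trans (leq_addr J N1) kN).
apply: (le_trans (claim _)).
have := HJ (k - N1)%N; rewrite leq_subRL ?kN //; last exact: (leq_trans (leq_addr J N1) kN).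
move=> h; have := h isT; lra.
Qed.


Lemma rec_dec n' (Gc : 'M[C]_n'.+1) (rs : seq C) :
  all (fun r => cmod r < 1) rs ->
  forall Y : 'M[C]_n'.+1, (\prod_(r <- rs) (Gc - r%:M)) *m Y = 0 ->
  tends0 (fun k => Gc ^+ k *m Y).
Proof.
elim/last_ind: rs => [|rs r IH].
  move=> _ Y; rewrite big_nil mul1mx => ->.
  by move=> e e0; exists 0%N => k _; rewrite mulmx0 sz0 ltW.
rewrite all_rcons => /andP [r1 ar] Y.
rewrite big_rcons /= -mulmxE -mulmxA => h.
have tv := IH ar _ h.
apply: (scal_dec (v := fun k => Gc ^+ k *m ((Gc - r%:M) *m Y)) (r := r)) => // k.
rewrite mulmxBl mulmxBr mul_scalar_mx -scalemxAr.
have -> : Gc ^+ k *m (Gc *m Y) = Gc ^+ k.+1 *m Y by rewrite mulmxA exprSr mulmxE.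
by rewrite addrC subrK.
Qed.


Lemma decay n' (Gc : 'M[C]_n'.+1) :
  (forall z, eigenvalue Gc z -> cmod z < 1) -> tends0 (fun k => Gc ^+ k).
Proof.
move=> eig.
have [rs Hrs] := closed_field_poly_normal (char_poly Gc).
move: Hrs; rewrite (monicP (char_poly_monic Gc)) scale1r => Hrs.
have ar : all (fun r => cmod r < 1) rs.
  apply/allP => r rin; apply: eig.
  by rewrite eigenvalue_root_char Hrs root_prod_XsubC.
have P0 : (\prod_(r <- rs) (Gc - r%:M)) *m 1%:M = 0.
  rewrite mulmx1 -(Cayley_Hamilton Gc) Hrs rmorph_prod /=.
  by apply: eq_bigr => r _; rewrite rmorphB /= horner_mx_X horner_mx_C.
have := rec_dec ar P0.
by move=> h e e0; have [N HN] := h e e0; exists N => k kN; rewrite -(mulmx1 (Gc ^+ k)); exact: HN.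
Qed.


Lemma eig_bound n (F : 'M[R]_n) (b : R) (z : C) :
  spectral_radius F < b ->
  eigenvalue (map_mx (fun x : R => (x%:C)%C) F) z -> cmod z < b.
Proof.
move=> sr ez.
set Fc := map_mx (fun x : R => (x%:C)%C) F in ez.
have [rs Hrs] := closed_field_poly_normal (char_poly Fc).
move: Hrs; rewrite (monicP (char_poly_monic Fc)) scale1r => Hrs.
have inrs w : eigenvalue Fc w -> w \in rs.
  by rewrite eigenvalue_root_char Hrs root_prod_XsubC.
set S := [set r : R | exists w : C, eigenvalue Fc w /\ r = cmod w]%classic.
have ub : has_ubound S.
  exists (\sum_(r <- rs) cmod r) => r [w [ew ->]].
  rewrite (big_rem _ (inrs _ ew)) /= lerDl.
  by apply: sumr_ge0 => y _; exact: cmod_ge0.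
have Sz : S (cmod z) by exists z.
have := ub_le_sup ub Sz.
rewrite -/(spectral_radius F) => h.
exact: le_lt_trans h sr.
Qed.


Lemma eig_scaled n (F : 'M[R]_n) (b : R) (w : C) : 0 < b ->
  spectral_radius F < b ->
  eigenvalue (map_mx (fun x : R => (x%:C)%C) (b^-1 *: F)) w -> cmod w < 1.
Proof.
move=> b0 sr /eigenvalueP [v vG v0].
have e : eigenvalue (map_mx (fun x : R => (x%:C)%C) F) ((b%:C)%C * w).
  apply/eigenvalueP; exists v => //.
  have E : map_mx (fun x : R => (x%:C)%C) (b^-1 *: F) =
     ((b^-1)%:C)%C *: map_mx (fun x : R => (x%:C)%C) F.
    by apply/matrixP => i j; rewrite !mxE rmorphM.
  rewrite E -scalemxAr in vG.
  have bb : ((b%:C)%C : C) * ((b^-1)%:C)%C = 1 by rewrite -rmorphM /= mulfV ?gt_eqF.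
  by rewrite -scalerA -vG scalerA bb scale1r.
have := eig_bound sr e; rewrite cmodM cmodR gtr0_norm //.
by rewrite -[X in _ < X]mulr1 ltr_pM2l.
Qed.

Lemma cert_small n (H : 'M[R]_n) : msum H <= 1 / 3 ->
  posdef (1%:M - H^T *m 1%:M *m H).
Proof.
move=> hs; split.
  by rewrite linearB /= !trmx_mul trmxK !trmx1 mulmxA.
move=> x x0; change (0 < qf (1%:M - H^T *m 1%:M *m H) x).
rewrite qfBM qf_conj !qf1.
have h1 : n2 (H *m x) = ((H *m x)^T *m H *m x) 0 0 by rewrite /n2 mulmxA.
have h2 := bil_bound (H *m x) H x.
rewrite -h1 in h2.
have h3 := ler_norm (n2 (H *m x)).
have a0 := n2_ge0 (H *m x); have b0 := n2_gt0 x0.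
have m0 := msum_ge0 H.
have h4 : msum H * (n2 (H *m x) + n2 x) <= 1 / 3 * (n2 (H *m x) + n2 x).
  by apply: ler_wpM2r => //; lra.
lra.
Qed.

Lemma map_pow n' (G : 'M[R]_n'.+1) k :
  map_mx (fun x : R => (x%:C)%C) (G ^+ k) = (map_mx (fun x : R => (x%:C)%C) G) ^+ k.
Proof.
change (map_mx (real_complex R) (G ^+ k) = (map_mx (real_complex R) G) ^+ k).
elim: k => [|k IH]; first by rewrite !expr0 map_mx1.
by rewrite !exprS -!mulmxE map_mxM IH.
Qed.

Lemma sz_map p q (M : 'M[R]_(p, q)) :
  sz (map_mx (fun x : R => (x%:C)%C) M) = \sum_i \sum_j `|M i j|.
Proof.
by apply: eq_bigr => i _; apply: eq_bigr => j _; rewrite mxE cmodR.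
Qed.

Lemma base_cert n (F : 'M[R]_n) (b : R) : 0 < b -> spectral_radius F < b ->
  exists2 N, (0 < N)%N &
    posdef (1%:M - ((b^-1 *: F) ^+ N)^T *m 1%:M *m (b^-1 *: F) ^+ N).
Proof.
move=> b0 sr.
case: n F sr => [|n'] F sr.
  exists 1%N => //; split.
    by apply/matrixP => i; case: i.
  by move=> x; rewrite [x]flatmx0 eqxx.
set G := b^-1 *: F.
have dec := decay (fun z => @eig_scaled _ F b z b0 sr).
have [N HN] := dec (1 / 3) ltac:(lra).
exists N.+1 => //.
apply: cert_small.
have := HN N.+1 (leqnSn N).
by rewrite -map_pow sz_map.
Qed.

End Cx.


Lemma sr_ge0 (R : realType) n (F : 'M[R]_n) : 0 <= spectral_radius F.
Proof.
rewrite /spectral_radius.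
set S := [set r : R | _]%classic.
case: (pselect (has_sup S)) => [hs|hs]; last by rewrite sup_out.
have [r Sr] := hs.1.
have r0 : 0 <= r by case: Sr => z [_ ->]; exact: cmod_ge0.
exact: le_trans r0 (ub_le_sup hs.2 Sr).
Qed.

Lemma posdef_of_ge (R : realType) n (M M' : 'M[R]_n) :
  M^T = M -> (forall x, qf M' x <= qf M x) -> posdef M' -> posdef M.
Proof.
move=> MT le [_ Mp]; split => // x x0.
exact: lt_le_trans (Mp x x0) (le x).
Qed.

Lemma posdef1 (R : realType) n : posdef (1%:M : 'M[R]_n).
Proof.
split; first by apply/matrixP => i j; rewrite !mxE eq_sym.
by move=> x x0; rewrite mulmx1 -/(n2 x) n2_gt0.
Qed.

Section Main.
Variables (R : realType) (n m : nat) (A : 'M[R]_n) (B : 'M[R]_(n, m))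
  (Q : 'M[R]_n) (Rw : 'M[R]_m) (sqrtQ : 'M[R]_n) (b : R)
  (K : nat -> 'M[R]_(m, n)) (P : nat -> 'M[R]_n) (c : nat -> R).
Hypotheses (HQ : psd Q) (HR : posdef Rw) (HS : psd sqrtQ)
  (HSQ : sqrtQ *m sqrtQ = Q) (Hobs : observable A sqrtQ) (Hc0 : c 0%N = 1)
  (Hsr : spectral_radius (A - B *m K 0%N) < b).
Variable i : nat.
Hypothesis Hyp : forall j : nat, (j <= i)%N ->
       lyap_eq A B Q Rw b c j (K j) (P j)
       /\ K j.+1 = next_gain A B Rw b c j (P j)
       /\ (let Qc := P j - Q - (K j.+1)^T *m Rw *m K j.+1 in
           if Qc \in unitmx then
             1 < c j.+1 < Num.sqrt (min_singular_value (P j *m invmx Qc))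
           else c j.+1 == 1).

Definition s j := cprod c j / b ^+ 2.
Definition G j := Num.sqrt (s j) *: (A - B *m K j).
Definition W j := Q + (K j)^T *m Rw *m K j.

Lemma b0 : 0 < b.
Proof. exact: le_lt_trans (sr_ge0 _) Hsr. Qed.

Lemma cpos j : (j <= i.+1)%N -> 0 < c j.
Proof.
case: j => [|j] ji; first by rewrite Hc0.
have [_ [_ h]] := Hyp ji.
move: h; cbv zeta; case: (_ \in unitmx) => [/andP [h _]|/eqP ->] //; lra.
Qed.

Lemma cprod_pos j : (j <= i.+1)%N -> 0 < cprod c j.
Proof.
move=> ji; rewrite /cprod; apply: prodr_gt0 => k _.
apply: exprn_gt0; apply: cpos; apply: leq_trans ji; rewrite -ltnS; exact: ltn_ord.
Qed.

Lemma s_pos j : (j <= i.+1)%N -> 0 < s j.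
Proof. by move=> ji; rewrite /s divr_gt0 ?cprod_pos // exprn_gt0 // b0. Qed.

Lemma cprodS j : cprod c j.+1 = cprod c j * c j.+1 ^+ 2.
Proof. by rewrite /cprod big_ord_recr. Qed.

Lemma lyap_iff j X : (j <= i.+1)%N ->
  lyap_eq A B Q Rw b c j (K j) X <-> X - (G j)^T *m X *m G j = W j.
Proof.
move=> ji.
have sq : Num.sqrt (s j) ^+ 2 = s j by rewrite sqr_sqrtr // ltW // s_pos.
have E : (G j)^T *m X *m G j = s j *: ((A - B *m K j)^T *m X *m (A - B *m K j)).
  have tZ : (Num.sqrt (s j) *: (A - B *m K j))^T = Num.sqrt (s j) *: (A - B *m K j)^T.
    by apply/matrixP => p q; rewrite !mxE.
  by rewrite /G tZ -!scalemxAl -scalemxAr scalerA -expr2 sq.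
rewrite /lyap_eq E -/(s j) /W.
split => h; apply/matrixP => p q; have := congr1 (fun Z : 'M[R]_n => Z p q) h;
  rewrite /= !(entD, entN, entZ, ent0) => e; lra.
Qed.


Lemma psd0 : psd (0 : 'M[R]_n).
Proof. by split; [rewrite trmx0 | move=> x; rewrite mulmx0 mul0mx mxE]. Qed.

Lemma W_facts j :
  [/\ (W j)^T = W j, forall y, 0 <= qf (W j) y &
      (j <= i.+1)%N -> posdef (\sum_(k < n) ((G j) ^+ k)^T *m W j *m (G j) ^+ k)].
Proof.
have [WT Wge _] := W_props (K j) HS HSQ HR psd0.
rewrite addr0 in WT Wge.
split => // ji.
have a0 : Num.sqrt (s j) != 0 by rewrite gt_eqF // sqrtr_gt0 s_pos.
have := obs_pd B (K j) a0 HS HSQ HR psd0 Hobs.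
by rewrite addr0.
Qed.

Lemma from_cert j (Pc : 'M[R]_n) N : (j <= i.+1)%N -> (0 < N)%N -> posdef Pc ->
  posdef (Pc - ((G j) ^+ N)^T *m Pc *m (G j) ^+ N) ->
  [/\ forall X, lyap_eq A B Q Rw b c j (K j) X -> posdef X,
      exists X, lyap_eq A B Q Rw b c j (K j) X &
      forall X Y, lyap_eq A B Q Rw b c j (K j) X ->
                  lyap_eq A B Q Rw b c j (K j) Y -> X = Y].
Proof.
move=> ji N0 Ppd Cpd.
have [inj surj pd] := stab N0 Ppd Cpd.
have [WT Wge Wpd] := W_facts j.
split.
- move=> X /(lyap_iff X ji) hX; exact: pd _ _ WT Wge (Wpd ji) hX.
- have [X hX] := surj (W j); exists X; exact/(lyap_iff X ji).
- move=> X Y /(lyap_iff X ji) hX /(lyap_iff Y ji) hY.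
  have h : lyapf (G j) (X - Y) = 0 by rewrite linearB /= /lyapf hX hY subrr.
  by move/inj/eqP: h; rewrite subr_eq0 => /eqP.
Qed.


Lemma GtPG j X : (j <= i.+1)%N ->
  (G j)^T *m X *m G j = s j *: ((A - B *m K j)^T *m X *m (A - B *m K j)).
Proof.
move=> ji.
have sq : Num.sqrt (s j) ^+ 2 = s j by rewrite sqr_sqrtr // ltW // s_pos.
have tZ : (Num.sqrt (s j) *: (A - B *m K j))^T = Num.sqrt (s j) *: (A - B *m K j)^T.
  by apply/matrixP => p q; rewrite !mxE.
by rewrite /G tZ -!scalemxAl -scalemxAr scalerA -expr2 sq.
Qed.

Lemma step_cert j : (j <= i)%N -> posdef (P j) ->
  exists2 N, (0 < N)%N & posdef (P j - ((G j.+1) ^+ N)^T *m P j *m (G j.+1) ^+ N).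
Proof.
move=> ji Ppd.
have [hl [hK hc]] := Hyp ji.
have [PT Pp] := Ppd.
have sp : 0 < s j := s_pos (leqW ji).
have RT := HR.1.
set Pj := P j in hl hK hc PT Pp Ppd *.
set sj := s j in sp *.
set M := B^T *m Pj *m B + sj^-1 *: Rw.
have qB (x : 'cV[R]_m) : 0 <= ((B *m x)^T *m Pj *m (B *m x)) 0 0.
  case: (eqVneq (B *m x) 0) => [->|h]; first by rewrite mulmx0 mxE.
  exact: ltW (Pp _ h).
have Mpd : posdef M.
  split; first by rewrite /M linearD /= linearZ /= !trmx_mul trmxK PT RT mulmxA.
  move=> x x0.
  have e : (x^T *m M *m x) 0 0 = ((B *m x)^T *m Pj *m (B *m x)) 0 0 + sj^-1 * (x^T *m Rw *m x) 0 0.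
    by rewrite /M mulmxDr mulmxDl -scalemxAr -scalemxAl entD entZ trmx_mul !mulmxA.
  rewrite e; apply: ltr_wpDl; first exact: qB.
  by apply: mulr_gt0; [rewrite invr_gt0 | exact: HR.2].
have Mu := posdef_unit Mpd.
have hK' : K j.+1 = invmx M *m (B^T *m Pj *m A).
  by rewrite hK /next_gain /M /sj /s invf_div.
have CS := complete_sq (lt0r_neq0 sp) PT RT Mu hl.
rewrite /= -/M -hK' in CS.
set Kn := K j.+1 in hK' hc CS *.
set Fn := A - B *m Kn in CS *.
set L := K j - Kn in CS.
set M' := sj *: (B^T *m Pj *m B) + Rw in CS.
set D := L^T *m M' *m L in CS.
have M'pd : posdef M'.
  split; first by rewrite /M' linearD /= linearZ /= !trmx_mul trmxK PT RT mulmxA.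
  move=> x x0.
  have e : (x^T *m M' *m x) 0 0 = sj * ((B *m x)^T *m Pj *m (B *m x)) 0 0 + (x^T *m Rw *m x) 0 0.
    by rewrite /M' mulmxDr mulmxDl -scalemxAr -scalemxAl entD entZ trmx_mul !mulmxA.
  rewrite e; apply: ltr_wpDl; last exact: HR.2.
  by apply: mulr_ge0; [exact: ltW | exact: qB].
have Dpsd : psd D.
  split; first by rewrite /D !trmx_mul trmxK M'pd.1 mulmxA.
  move=> x; have e : (x^T *m D *m x) 0 0 = ((L *m x)^T *m M' *m (L *m x)) 0 0.
    by rewrite /D trmx_mul !mulmxA.
  rewrite e; case: (eqVneq (L *m x) 0) => [->|h]; first by rewrite mulmx0 mxE.
  exact: ltW (M'pd.2 _ h).
have ji1 : (j.+1 <= i.+1)%N by [].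
have sS : s j.+1 = sj * c j.+1 ^+ 2 by rewrite /s /sj /s cprodS mulrAC.
have GPG := GtPG Pj ji1.
rewrite -/Kn -/Fn sS in GPG.
set FPF := Fn^T *m Pj *m Fn in CS GPG.
have FPFT : FPF^T = FPF by rewrite /FPF !trmx_mul trmxK PT mulmxA.
have FPFge x : 0 <= qf FPF x.
  rewrite /FPF qf_conj; case: (eqVneq (Fn *m x) 0) => [->|h]; first by rewrite qf0.
  exact: ltW (Pp _ h).
move: hc; cbv zeta.
set Qc := Pj - Q - Kn^T *m Rw *m Kn.
have QcE : Qc = sj *: FPF + D.
  apply/matrixP => p q; have := congr1 (fun Z : 'M[R]_n => Z p q) CS.
  rewrite /Qc !(entD, entN, entZ) => e; lra.
have QcT : Qc^T = Qc by rewrite QcE linearD /= linearZ /= FPFT Dpsd.1.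
have Qcge y : 0 <= qf Qc y.
  rewrite QcE qfDM qfZM; apply: addr_ge0; first by apply: mulr_ge0; [exact: ltW|exact: FPFge].
  exact: Dpsd.2.
case: ifP => Qu.
  case/andP => c1 csig.
  have spd := sigma_cond Ppd QcT Qcge Qu c1 csig.
  exists 1%N => //.
  apply: (posdef_of_ge _ _ spd).
    by rewrite expr1 linearB /= !trmx_mul trmxK PT mulmxA.
  move=> x; rewrite expr1 GPG QcE !qfBM !qfZM qfDM qfZM.
  have h1 := FPFge x; have h2 := Dpsd.2 x; rewrite -/(qf D x) in h2.
  have h3 : 0 <= c j.+1 ^+ 2 by exact: sqr_ge0.
  nra.
move/eqP => c1.
rewrite c1 expr1n mulr1 in GPG.
have a0 : Num.sqrt (s j.+1) != 0 by rewrite gt_eqF // sqrtr_gt0 s_pos.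
have obs : posdef (\sum_(k < n) ((G j.+1) ^+ k)^T *m (Q + Kn^T *m Rw *m Kn + D) *m (G j.+1) ^+ k).
  exact: (obs_pd B Kn a0 HS HSQ HR Dpsd Hobs).
have [W'T W'ge _] := W_props Kn HS HSQ HR Dpsd.
exists n.+1 => //.
apply: (posdef_of_ge _ _ obs).
  by rewrite linearB /= !trmx_mul trmxK PT mulmxA.
move=> x; rewrite tel GPG CS !qf_sum.
apply: (@sum_widen _ (fun k => qf (((G j.+1) ^+ k)^T *m (Q + Kn^T *m Rw *m Kn + D) *m (G j.+1) ^+ k) x)).
  exact: leqnSn.
by move=> k; rewrite qf_conj.
Qed.


Lemma base0 : exists2 N, (0 < N)%N &
  posdef (1%:M - ((G 0) ^+ N)^T *m 1%:M *m (G 0) ^+ N).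
Proof.
have e : Num.sqrt (s 0) = b^-1.
  rewrite /s /cprod big_ord1 Hc0 expr1n mul1r -exprVn sqrtr_sqr ger0_norm //.
  by rewrite invr_ge0 ltW // b0.
rewrite /G e; exact: base_cert b0 Hsr.
Qed.

Lemma Ppd j : (j <= i)%N -> posdef (P j).
Proof.
elim: j => [|j IH] ji.
  have [N N0 C] := base0.
  have [pd _ _] := from_cert (leq0n _) N0 (posdef1 _ _) C.
  exact: pd _ (Hyp (leq0n i)).1.
have Pj := IH (ltnW ji).
have [N N0 C] := step_cert (ltnW ji) Pj.
have [pd _ _] := from_cert (leqW ji) N0 Pj C.
exact: pd _ (Hyp ji).1.
Qed.

Lemma main_result : exists X : 'M[R]_n,
      (posdef X /\ lyap_eq A B Q Rw b c i.+1 (K i.+1) X)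
      /\ forall Y : 'M[R]_n, posdef Y -> lyap_eq A B Q Rw b c i.+1 (K i.+1) Y -> Y = X.
Proof.
have Pi := Ppd (leqnn i).
have [N N0 C] := step_cert (leqnn i) Pi.
have [pd [X hX] un] := from_cert (leqnn _) N0 Pi C.
exists X; split; first by split => //; exact: pd.
by move=> Y _ hY; exact: un.
Qed.

End Main.

Unset Implicit Arguments.

Theorem theorem2 (R : realType) (n m : nat)
  (A : 'M[R]_n) (B : 'M[R]_(n, m)) (Q : 'M[R]_n) (Rw : 'M[R]_m) (sqrtQ : 'M[R]_n)
  (b : R) (K : nat -> 'M[R]_(m, n)) (P : nat -> 'M[R]_n) (c : nat -> R) :
  psd Q -> posdef Rw ->
  psd sqrtQ -> sqrtQ *m sqrtQ = Q ->
  controllable A B -> observable A sqrtQ ->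
  c 0%N = 1 ->
  spectral_radius (A - B *m K 0%N) < b ->
  forall i : nat,
    (forall j : nat, (j <= i)%N ->
       lyap_eq A B Q Rw b c j (K j) (P j)
       /\ K j.+1 = next_gain A B Rw b c j (P j)
       /\ (let Qc := P j - Q - (K j.+1)^T *m Rw *m K j.+1 in
           if Qc \in unitmx then
             1 < c j.+1 < Num.sqrt (min_singular_value (P j *m invmx Qc))
           else c j.+1 == 1)) ->
    exists X : 'M[R]_n,
      (posdef X /\ lyap_eq A B Q Rw b c i.+1 (K i.+1) X)
      /\ forall Y : 'M[R]_n, posdef Y -> lyap_eq A B Q Rw b c i.+1 (K i.+1) Y -> Y = X.
Proof.
move=> HQ HR HS HSQ _ Hobs Hc0 Hsr i Hyp.
exact: (main_result HR HS HSQ Hobs Hc0 Hsr Hyp).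
Qed.
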